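(* Let $(S,* )$ be a free binary system (free magma) generated by a nonempty set $I$. Then there is no mean $\mu$ on $S$ which is idempotent, i.e. there is no mean $\mu$ on $S$ with $\mu * \mu = \mu$.
   Context: A binary system (magma) is a nonempty set equipped with a binary operation. A mean on a set $S$ is a linear functional $\mu \in \ell^\infty(S)^*$ with $\mu(\chi_S) = 1$ and $\mu(f) \geq 0$ whenever $f \geq 0$; means are identified with finitely additive probability measures on all subsets of $S$ (writing $\mu(A) = \mu(\chi_A)$, and $\int f\,d\mu = \mu(f)$). If $(S,* )$ is a binary system, the operation is extended to means on $S$ by $(\mu * \nu)(f) = \int \left( \int f(s * t)\, d\nu(t) \right) d\mu(s)$ for $f \in \ell^\infty(S)$; that is, $(\mu*\nu)(f) = \mu(g)$ where $g(s) = \nu(t \mapsto f(s*t))$. *)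

(* Defs.v *)
From Stdlib Require Import Reals.
Open Scope R_scope.

Inductive fmagma (I : Type) : Type :=
  | Gen : I -> fmagma I
  | Node : fmagma I -> fmagma I -> fmagma I.
Arguments Gen {I} _.
Arguments Node {I} _ _.

Definition fmul {I : Type} (s t : fmagma I) : fmagma I := Node s t.

Definition bounded_fun {S : Type} (f : S -> R) : Prop :=
  exists M : R, forall s, Rabs (f s) <= M.

(* A mean on S: a linear functional on l^infty(S), positive, with mu(chi_S) = 1.
   The functional is represented as a map (S -> R) -> R whose values on
   unbounded functions are irrelevant (all conditions only concern bounded_fun f). *)
Definition is_mean {S : Type} (mu : (S -> R) -> R) : Prop :=
  (forall f g, bounded_fun f -> bounded_fun g -> mu (fun s => f s + g s) = mu f + mu g) /\
  (forall (c : R) f, bounded_fun f -> mu (fun s => c * f s) = c * mu f) /\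
  (forall f, bounded_fun f -> (forall s, 0 <= f s) -> 0 <= mu f) /\
  mu (fun _ => 1) = 1.

Definition mean_conv {S : Type} (op : S -> S -> S) (mu nu : (S -> R) -> R)
  : (S -> R) -> R :=
  fun f => mu (fun s => nu (fun t => f (op s t))).

(* Main.v *)
Require Import Defs.
From Stdlib Require Import Reals Lra Lia FunctionalExtensionality.
Open Scope R_scope.

Fixpoint depth {I : Type} (x : fmagma I) : nat :=
  match x with Gen _ => 0%nat | Node s t => S (Nat.max (depth s) (depth t)) end.

Fixpoint rho {I : Type} (x : fmagma I) : nat :=
  match x with
  | Gen _ => 0%nat
  | Node s t => if Nat.ltb (rho t) (depth s) then S (rho t) else 0%nat
  end.

Definition ind {S : Type} (b : S -> bool) : S -> R := fun x => if b x then 1 else 0.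

Lemma ind_bounded {S : Type} (b : S -> bool) : bounded_fun (ind b).
Proof. exists 1; intro s; unfold ind; destruct (b s);
  [rewrite Rabs_R1 | rewrite Rabs_R0]; lra. Qed.

Lemma mu_ext {S : Type} (mu : (S -> R) -> R) f g :
  (forall x, f x = g x) -> mu f = mu g.
Proof. intro H; f_equal; apply functional_extensionality; exact H. Qed.

Lemma bounded_one {S : Type} : bounded_fun (fun _ : S => 1).
Proof. exists 1; intro; rewrite Rabs_R1; lra. Qed.

Lemma mu_const {S : Type} (mu : (S -> R) -> R) (Hm : is_mean mu) c :
  mu (fun _ => c) = c.
Proof.
  destruct Hm as [_ [H2 [_ H4]]].
  transitivity (mu (fun _ => c * 1)).
  - apply mu_ext; intro; ring.
  - rewrite (H2 c (fun _ => 1) bounded_one), H4; ring.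
Qed.

Lemma mu_scal {S : Type} (mu : (S -> R) -> R) (Hm : is_mean mu) c b :
  mu (fun x => c * ind b x) = c * mu (ind b).
Proof. destruct Hm as [_ [H2 _]]. apply H2, ind_bounded. Qed.

Lemma mu_add {S : Type} (mu : (S -> R) -> R) (Hm : is_mean mu) b1 b2 :
  mu (fun x => ind b1 x + ind b2 x) = mu (ind b1) + mu (ind b2).
Proof. destruct Hm as [H1 _]. apply H1; apply ind_bounded. Qed.

Lemma mu_nonneg {S : Type} (mu : (S -> R) -> R) (Hm : is_mean mu) b :
  0 <= mu (ind b).
Proof. destruct Hm as [_ [_ [H3 _]]]. apply H3; [apply ind_bounded|].
  intro s; unfold ind; destruct (b s); lra. Qed.

Lemma mu_le1 {S : Type} (mu : (S -> R) -> R) (Hm : is_mean mu) b :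
  mu (ind b) <= 1.
Proof.
  pose proof (mu_nonneg mu Hm (fun x => negb (b x))).
  rewrite <- (mu_const mu Hm 1).
  rewrite (mu_ext mu (fun _ => 1) (fun x => ind b x + ind (fun x => negb (b x)) x)).
  - rewrite mu_add; auto; lra.
  - intro x; unfold ind; destruct (b x); simpl; lra.
Qed.

Theorem mainTheorem1 (I : Type) (i0 : I) :
  ~ exists mu : (fmagma I -> R) -> R,
      is_mean mu /\
      (forall f : fmagma I -> R, bounded_fun f -> mean_conv fmul mu mu f = mu f).
Proof.
  intros [mu [Hm H]].
  unfold mean_conv, fmul in H.
  assert (Hd : forall n, mu (ind (fun x => Nat.leb (depth x) n)) = 0).
  { induction n.
    - rewrite <- H by apply ind_bounded.
      transitivity (mu (fun _ => 0)); [|apply mu_const; auto].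
      apply mu_ext; intro s.
      transitivity (mu (fun _ => 0)); [|apply mu_const; auto].
      apply mu_ext; intro t. reflexivity.
    - rewrite <- H by apply ind_bounded.
      transitivity (mu (fun _ => 0)); [|apply mu_const; auto].
      apply mu_ext; intro s.
      transitivity (mu (fun t => ind (fun x => Nat.leb (depth x) n) s
                                 * ind (fun x => Nat.leb (depth x) n) t)).
      + apply mu_ext; intro t. unfold ind; simpl.
        destruct (Nat.leb_spec (depth s) n); destruct (Nat.leb_spec (depth t) n);
        destruct (Nat.leb_spec (Nat.max (depth s) (depth t)) n);
        first [lra | exfalso; lia].
      + rewrite mu_scal, IHn by auto. ring. }
  assert (Hgt : forall n, mu (ind (fun x => Nat.ltb n (depth x))) = 1).
  { intro n. pose proof (Hd n).
    rewrite <- (mu_const mu Hm 1).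
    rewrite (mu_ext mu (fun _ => 1) (fun x => ind (fun x => Nat.ltb n (depth x)) x
                                    + ind (fun x => Nat.leb (depth x) n) x)).
    - rewrite mu_add by auto; lra.
    - intro x; unfold ind.
      destruct (Nat.ltb_spec n (depth x)); destruct (Nat.leb_spec (depth x) n);
      first [lra | exfalso; lia]. }
  set (p := fun n => mu (ind (fun x => Nat.eqb (rho x) n))).
  assert (Hp : forall n, p (S n) = p n).
  { intro n. unfold p. rewrite <- H by apply ind_bounded.
    transitivity (mu (fun s => p n * ind (fun x => Nat.ltb n (depth x)) s)).
    - apply mu_ext; intro s.
      transitivity (mu (fun t => ind (fun x => Nat.ltb n (depth x)) s
                                 * ind (fun x => Nat.eqb (rho x) n) t)).
      + apply mu_ext; intro t. unfold ind; simpl.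
        destruct (Nat.ltb_spec (rho t) (depth s));
        destruct (Nat.ltb_spec n (depth s));
        destruct (Nat.eqb_spec (rho t) n);
        try (destruct (Nat.eqb_spec (S (rho t)) (S n)));
        try (destruct (Nat.eqb_spec 0 (S n)));
        first [lra | exfalso; lia].
      + rewrite mu_scal by auto. unfold p. ring.
    - rewrite mu_scal, Hgt by auto. unfold p; ring. }
  assert (Hp0 : forall n, p n = p 0%nat).
  { induction n; auto. rewrite Hp; auto. }
  assert (Hsum : forall M, mu (ind (fun x => Nat.ltb (rho x) M)) = INR M * p 0%nat).
  { induction M.
    - simpl. transitivity (mu (fun _ => 0)); [|rewrite mu_const; auto; ring].
      apply mu_ext; intro x; unfold ind; destruct (Nat.ltb_spec (rho x) 0); 
      first [lra | exfalso; lia].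
    - rewrite (mu_ext mu _ (fun x => ind (fun x => Nat.ltb (rho x) M) x
                                    + ind (fun x => Nat.eqb (rho x) M) x)).
      + rewrite mu_add by auto. rewrite IHM. fold (p M). rewrite (Hp0 M), S_INR. ring.
      + intro x; unfold ind.
        destruct (Nat.ltb_spec (rho x) (S M)); destruct (Nat.ltb_spec (rho x) M);
        destruct (Nat.eqb_spec (rho x) M); first [lra | exfalso; lia]. }
  assert (Hz : p 0%nat = 0).
  { assert (0 <= p 0%nat) by (apply mu_nonneg; auto).
    destruct (Rle_lt_or_eq_dec _ _ H0) as [Hlt|]; [|auto].
    exfalso. destruct (archimed_cor1 _ Hlt) as [N [HN HN0]].
    pose proof (mu_le1 mu Hm (fun x => Nat.ltb (rho x) N)). rewrite Hsum in H1.
    assert (0 < INR N) by (apply lt_0_INR; lia).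
    apply (Rmult_lt_compat_l (INR N)) in HN; auto.
    rewrite Rinv_r in HN by lra. lra. }
  assert (Hlt0 : forall M, mu (ind (fun x => Nat.ltb (rho x) M)) = 0).
  { intro M; rewrite Hsum, Hz; ring. }
  assert (Hge : mu (ind (fun x => Nat.leb 1 (rho x))) = 0).
  { rewrite <- H by apply ind_bounded.
    transitivity (mu (fun _ => 0)); [|apply mu_const; auto].
    apply mu_ext; intro s.
    rewrite <- (Hlt0 (depth s)).
    apply mu_ext; intro t. unfold ind; simpl.
    destruct (Nat.ltb_spec (rho t) (depth s)); simpl; reflexivity. }
  destruct Hm as [H1 [H2 [H3 H4]]].
  assert (Hm : is_mean mu) by (repeat split; auto).
  pose proof (Hlt0 1%nat).
  rewrite (mu_ext mu (fun _ => 1) (fun x => ind (fun x => Nat.ltb (rho x) 1) x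
                                    + ind (fun x => Nat.leb 1 (rho x)) x)) in H4.
  - rewrite mu_add in H4 by auto. lra.
  - intro x; unfold ind.
    destruct (Nat.ltb_spec (rho x) 1); destruct (Nat.leb_spec 1 (rho x));
    first [lra | exfalso; lia].
Qed.
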